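(* Let $S_n(x)$ be the Stirling polynomials, defined by $\left(\frac{t}{1-e^{-t}}\right)^{x+1}=\sum_{n\ge0}S_n(x)\frac{t^n}{n!}$. Then for every $n\ge0$, $$S_n(x)=n!\sum_{k=0}^{n}\binom{k+x}{k}\sum_{j=0}^{k}\frac{j!\,(-1)^{n+j}}{(n+j)!}\binom{k}{j}\left\{{n+j\atop j}\right\}.$$ *)

(* Defs.v *)
(* Formal power series in t with coefficients in {poly rat}
   (polynomials in the indeterminate x = 'X), represented as coefficient
   sequences nat -> {poly rat}. *)
From HB Require Import structures.
From mathcomp Require Import all_boot all_order all_algebra.
Set Implicit Arguments. Unset Strict Implicit. Unset Printing Implicit Defensive.
Import GRing.Theory Num.Theory.
Local Open Scope ring_scope.

Definition series := nat -> {poly rat}.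

Definition ser_one : series := fun n => (n == 0%N)%:R.
Definition ser_sub (f g : series) : series := fun n => f n - g n.
Definition ser_mul (f g : series) : series :=
  fun n => \sum_(i < n.+1) f i * g (n - i)%N.
Definition ser_pow (f : series) (k : nat) : series := iter k (ser_mul f) ser_one.

Definition gbinom (a : {poly rat}) (k : nat) : {poly rat} :=
  (k`!%:R : rat)^-1 *: \prod_(i < k) (a - i%:R).

(* f ^ a for a series f with constant term 1 and arbitrary exponent a,
   via the binomial series f^a = sum_k binom(a,k) (f-1)^k (only k <= n
   contributes to the coefficient of t^n). *)
Definition ser_cpow (f : series) (a : {poly rat}) : series :=
  fun n => \sum_(k < n.+1) gbinom a k * ser_pow (ser_sub f ser_one) k n.

Definition ser_inv (f : series) : series := ser_cpow f (-1).

Definition ser_exp_neg : series := fun n => ((-1) ^+ n / n`!%:R : rat)%:P.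
Definition ser_divt (f : series) : series := fun n => f n.+1.

Definition todd_series : series :=
  ser_inv (ser_divt (ser_sub ser_one ser_exp_neg)).

Definition stirling_poly (n : nat) : {poly rat} :=
  n`!%:R * ser_cpow todd_series ('X + 1) n.

Fixpoint stirling2 (n k : nat) : nat :=
  match n, k with
  | 0, 0 => 1
  | 0, _.+1 => 0
  | _.+1, 0 => 0
  | n'.+1, k'.+1 => k'.+1 * stirling2 n' k'.+1 + stirling2 n' k'
  end.

(* Main.v *)
Require Import Defs.
From HB Require Import structures.
From mathcomp Require Import all_boot all_order all_algebra.
From mathcomp Require Import zify ring lra.
Import GRing.Theory Num.Theory.
Set Implicit Arguments. Unset Strict Implicit. Unset Printing Implicit Defensive.
Local Open Scope ring_scope.

Section Trunc.
Variable R : comNzRingType.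
Implicit Types p q r : {poly R}.
Definition eqt (N : nat) p q := forall i, (i <= N)%N -> p`_i = q`_i.

Lemma eqt_refl N p : eqt N p p. Proof. by []. Qed.
Lemma eqt_sym N p q : eqt N p q -> eqt N q p.
Proof. by move=> h i hi; rewrite h. Qed.
Lemma eqt_trans N p q r : eqt N p q -> eqt N q r -> eqt N p r.
Proof. by move=> h1 h2 i hi; rewrite h1 // h2. Qed.
Lemma eqtMl N r p q : eqt N p q -> eqt N (r * p) (r * q).
Proof.
move=> h i hi; rewrite !coefM; apply: eq_bigr => j _; rewrite h //.
exact: leq_trans (leq_subr _ _) hi.
Qed.
Lemma eqtMr N r p q : eqt N p q -> eqt N (p * r) (q * r).
Proof. by rewrite ![_ * r]mulrC; apply: eqtMl. Qed.
Lemma eqtM N p p' q q' : eqt N p p' -> eqt N q q' -> eqt N (p * q) (p' * q').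
Proof. by move=> h1 h2; apply: (eqt_trans (q := p' * q)); [apply: eqtMr | apply: eqtMl]. Qed.
Lemma eqtB N p p' q q' : eqt N p p' -> eqt N q q' -> eqt N (p - q) (p' - q').
Proof. by move=> h1 h2 i hi; rewrite !coefB h1 // h2. Qed.
Lemma eqtX N p q k : eqt N p q -> eqt N (p ^+ k) (q ^+ k).
Proof.
move=> h; elim: k => [|k IH]; first exact: eqt_refl.
by rewrite !exprS; apply: eqtM.
Qed.

Lemma pow_vanish p k i : p`_0 = 0 -> (i < k)%N -> (p ^+ k)`_i = 0.
Proof.
move=> p0; elim: k i => [//|k IH] i hi.
rewrite exprS coefM big_ord_recl p0 mul0r add0r big1 // => j _.
rewrite IH ?mulr0 // lift0; move: (ltn_ord j) hi; lia.
Qed.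

End Trunc.

Notation Q := {poly rat}.
Definition Pser (N : nat) (f : series) : {poly Q} := \poly_(i < N.+1) f i.

Lemma coefPser N f i : (i <= N)%N -> (Pser N f)`_i = f i.
Proof. by move=> h; rewrite /Pser coef_poly ltnS h. Qed.

Lemma ser_mulP N f g k : (k <= N)%N -> ser_mul f g k = (Pser N f * Pser N g)`_k.
Proof.
move=> hk; rewrite coefM /ser_mul; apply: eq_bigr => j _.
have hj : (j <= N)%N by apply: leq_trans hk; rewrite -ltnS.
by rewrite !coefPser // (leq_trans (leq_subr _ _) hk).
Qed.

Lemma ser_powP N f j : eqt N (Pser N (ser_pow f j)) (Pser N f ^+ j).
Proof.
elim: j => [|j IH]; rewrite /eqt => k hk.
  by rewrite coefPser // expr0 coef1.
rewrite coefPser // /ser_pow iterS -/(ser_pow f j) (ser_mulP f _ hk) exprS.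
exact: (eqtMl _ IH hk).
Qed.

Lemma ser_powP' N f j k : (k <= N)%N -> ser_pow f j k = (Pser N f ^+ j)`_k.
Proof. by move=> hk; rewrite -ser_powP // coefPser. Qed.

Lemma ser_subP N f g : eqt N (Pser N (ser_sub f g)) (Pser N f - Pser N g).
Proof. by move=> i hi; rewrite coefB !coefPser. Qed.

Lemma ser_oneP N : eqt N (Pser N ser_one) 1.
Proof. by move=> i hi; rewrite coefPser // coef1. Qed.

Definition u : series := ser_divt (ser_sub ser_one ser_exp_neg).

Lemma u_val i : u i = ((-1) ^+ i / i.+1`!%:R : rat)%:P.
Proof.
rewrite /u /ser_divt /ser_sub /ser_one /ser_exp_neg (_ : (i.+1 == 0%N) = false) // mulr0n sub0r -polyCN.
by rewrite exprS mulN1r mulNr opprK.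
Qed.

Lemma prod_ffact (R : nzRingType) (m k : nat) :
  \prod_(i < k) (m%:R - i%:R : R) = (m ^_ k)%:R.
Proof.
elim: k => [|k IH]; first by rewrite big_ord0 ffactn0.
rewrite big_ord_recr /= IH ffactnSr natrM.
case: (leqP k m) => hk; first by rewrite natrB.
by rewrite ffact_small // !mul0r.
Qed.

Lemma scale_fact (p : Q) (k : nat) : (k`!%:R : rat)^-1 *: (p * k`!%:R) = p.
Proof.
rewrite mulr_natr -(@scaler_nat rat Q) scalerA mulVf ?scale1r //.
by rewrite pnatr_eq0 -lt0n fact_gt0.
Qed.

Lemma gbinom_nat m k : gbinom m%:R k = 'C(m, k)%:R.
Proof.
rewrite /gbinom prod_ffact -bin_ffact natrM.
by rewrite scale_fact.
Qed.

Lemma gbinom_m1 k : gbinom (-1) k = (-1) ^+ k.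
Proof.
rewrite /gbinom; suff -> : \prod_(i < k) (-1 - i%:R : Q) = (-1) ^+ k * k`!%:R.
  by rewrite scale_fact.
elim: k => [|k IH]; first by rewrite big_ord0 expr0 mul1r.
rewrite big_ord_recr /= IH factS natrM exprS.
rewrite (_ : -1 - k%:R = - (k.+1)%:R :> Q); last by rewrite -addn1 natrD opprD addrC.
by rewrite mulN1r mulrN -mulNr; ring.
Qed.

Lemma gbinom_comp p q k : gbinom p k \Po q = gbinom (p \Po q) k.
Proof.
rewrite /gbinom comp_polyZ; congr (_ *: _).
rewrite (big_morph (comp_poly q) (fst (comp_poly_multiplicative q)) (snd (comp_poly_multiplicative q))).
apply: eq_bigr => i _; by rewrite comp_polyB -polyC_natr comp_polyC.
Qed.

Definition cst (f : series) := forall i, (size (f i) <= 1)%N.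

Lemma sle1_mul (p q : Q) : (size p <= 1)%N -> (size q <= 1)%N -> (size (p * q)%R <= 1)%N.
Proof. move=> hp hq; apply: leq_trans (size_polyMleq p q) _; lia. Qed.

Lemma sle1_sum I (r : seq I) (F : I -> Q) :
  (forall i, (size (F i) <= 1)%N) -> (size (\sum_(i <- r) F i)%R <= 1)%N.
Proof.
move=> h; apply: (big_ind (fun p : Q => size p <= 1)%N) => //.
  by rewrite size_poly0.
by move=> x y hx hy; apply: leq_trans (size_polyD x y) _; rewrite geq_max hx hy.
Qed.

Lemma sle1_sub (p q : Q) : (size p <= 1)%N -> (size q <= 1)%N -> (size (p - q)%R <= 1)%N.
Proof.
move=> hp hq; apply: leq_trans (size_polyD _ _) _; by rewrite size_polyN geq_max hp hq.
Qed.

Lemma cst_mul f g : cst f -> cst g -> cst (ser_mul f g).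
Proof. by move=> hf hg i; apply: sle1_sum => j; apply: sle1_mul. Qed.

Lemma cst_one : cst ser_one.
Proof. by move=> i; rewrite /ser_one -polyC_natr size_polyC_leq1. Qed.

Lemma cst_pow f k : cst f -> cst (ser_pow f k).
Proof.
move=> hf; elim: k => [|k IH]; first exact: cst_one.
by rewrite /ser_pow iterS; apply: cst_mul.
Qed.

Lemma cst_sub f g : cst f -> cst g -> cst (ser_sub f g).
Proof. by move=> hf hg i; apply: sle1_sub. Qed.

Lemma cst_u : cst u.
Proof. by move=> i; rewrite u_val size_polyC_leq1. Qed.

Lemma cst_todd : cst todd_series.
Proof.
move=> i; apply: sle1_sum => k; apply: sle1_mul.
  by rewrite gbinom_m1 -(rmorph_sign (@polyC rat)) size_polyC_leq1.
by apply: cst_pow; apply: cst_sub; [exact: cst_u | exact: cst_one].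
Qed.

Lemma comp_cst (p q : Q) : (size p <= 1)%N -> p \Po q = p.
Proof. by move=> h; rewrite (size1_polyC h) comp_polyC. Qed.

Lemma cpow_comp q n : ser_cpow todd_series q n = ser_cpow todd_series 'X n \Po q.
Proof.
rewrite /ser_cpow (big_morph (comp_poly q) (fun a b => comp_polyD a b q) (comp_poly0 q)); apply: eq_bigr => k _.
rewrite comp_polyM gbinom_comp comp_polyX comp_cst //.
by apply: cst_pow; apply: cst_sub; [exact: cst_todd | exact: cst_one].
Qed.

Definition inner (n k : nat) : Q :=
  \sum_(j < k.+1)
      ((j`!%:R * (-1) ^+ (n + j) / (n + j)`!%:R : rat)
        * (('C(k, j) * stirling2 (n + j) j)%N)%:R)%:P.

Definition Bf (n : nat) (y : Q) : Q := \sum_(k < n.+1) gbinom (y + k%:R) k * inner n k.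

Lemma Bf_comp n q : Bf n 'X \Po q = Bf n q.
Proof.
rewrite /Bf (big_morph (comp_poly q) (fun a b => comp_polyD a b q) (comp_poly0 q)); apply: eq_bigr => k _.
rewrite comp_polyM gbinom_comp comp_polyD comp_polyX -polyC_natr comp_polyC polyC_natr.
by rewrite comp_cst //; apply: sle1_sum => j; apply: size_polyC_leq1.
Qed.

Lemma sum_ext (G : nmodType) (a b : nat) (F : nat -> G) : (a <= b)%N ->
  (forall k, (a <= k)%N -> (k < b)%N -> F k = 0) ->
  \sum_(k < b) F k = \sum_(k < a) F k.
Proof.
move=> hab h; rewrite -!(big_mkord xpredT) (big_cat_nat (leq0n a) hab) /=.
have -> : \sum_(a <= i < b) F i = 0.
  by rewrite big_nat_cond big1 // => k /andP[/andP[h1 h2] _]; exact: h.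
by rewrite addr0.
Qed.

Section Nat.
Variable N : nat.
Definition U : {poly Q} := Pser N u.
Definition V : {poly Q} := 1 - U.
Definition H : {poly Q} := Pser N todd_series.

Lemma U0 : U`_0 = 1.
Proof. by rewrite /U coefPser // u_val expr0 mul1r factS fact0 mul1n invr1. Qed.

Lemma V0 : V`_0 = 0.
Proof. by rewrite /V coefB U0 coef1 subrr. Qed.

Lemma Pu1 : eqt N (Pser N (ser_sub u ser_one)) (U - 1).
Proof. by apply: eqt_trans (ser_subP _ _) _; apply: eqtB; [by move=> ? ? | exact: ser_oneP]. Qed.

Lemma Pv : eqt N (Pser N (ser_sub ser_one u)) V.
Proof. by rewrite /V; apply: eqt_trans (ser_subP _ _) _; apply: eqtB; [exact: ser_oneP | by move=> ? ?]. Qed.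

Lemma Ph1 : eqt N (Pser N (ser_sub todd_series ser_one)) (H - 1).
Proof. by apply: eqt_trans (ser_subP _ _) _; apply: eqtB; [by move=> ? ? | exact: ser_oneP]. Qed.

Definition G : {poly Q} := \sum_(k < N.+1) V ^+ k.

Lemma H_G : eqt N H G.
Proof.
move=> i hi; rewrite /H coefPser // /todd_series /ser_inv /ser_cpow /G coef_sum.
rewrite (@sum_ext _ i.+1 N.+1 (fun k => (V ^+ k)`_i)) //; last first.
  by move=> k hk _; rewrite pow_vanish // V0.
apply: eq_bigr => k _.
rewrite gbinom_m1 (ser_powP' (N := N)) // (eqtX k Pu1 hi) /V.
by rewrite -coefCM rmorph_sign -exprMn mulN1r opprB.
Qed.

Lemma HU1 : eqt N (H * U) 1.
Proof.
apply: eqt_trans (eqtMr U H_G) _.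
have -> : U = 1 - V by rewrite /V opprB addrC subrK.
have -> : G * (1 - V) = 1 - V ^+ N.+1.
  by rewrite /G -opprB mulrN mulrC -subrX1 opprB.
by move=> i hi; rewrite coefB (pow_vanish V0) // subr0.
Qed.

Definition Sm (m : nat) : {poly Q} := \sum_(k < N.+1) V ^+ k *+ 'C(m + k, k).

Lemma Sm_step m : eqt N (Sm m) (Sm m.+1 * U).
Proof.
have E1 : Sm m.+1 = Sm m + V * \sum_(k < N) V ^+ k *+ 'C(m.+1 + k, k).
  rewrite /Sm !big_ord_recl !bin0 mulr_sumr -addrA; congr (_ + _).
  rewrite -big_split /=; apply: eq_bigr => k _.
  rewrite /bump /= add1n addSn binS mulrnDr; congr (_ + _).
  by rewrite mulrnAr -exprS addSnnS.
have E2 : Sm m.+1 * V = V * \sum_(k < N) V ^+ k *+ 'C(m.+1 + k, k)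
                       + V ^+ N.+1 *+ 'C(m.+1 + N, N).
  rewrite /Sm big_ord_recr /= mulrDl; congr (_ + _); [exact: mulrC | by rewrite mulrnAl exprSr].
have -> : Sm m.+1 * U = Sm m - V ^+ N.+1 *+ 'C(m.+1 + N, N).
  rewrite (_ : U = 1 - V); last by rewrite /V opprB addrC subrK.
  rewrite mulrBr mulr1 E2 {1}E1 opprD addrA addrK //.
by move=> i hi; rewrite coefB coefMn (pow_vanish V0) // mul0rn subr0.
Qed.

Lemma HSm m : eqt N (H ^+ m.+1) (Sm m).
Proof.
elim: m => [|m IH].
  rewrite expr1; apply: eqt_trans H_G _ => i hi.
  suff -> : Sm 0 = G by [].
  by rewrite /G /Sm; apply: eq_bigr => k _; rewrite add0n binn.
rewrite exprS; apply: eqt_trans (eqtMl H IH) _.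
move=> i hi; rewrite (eqtMl H (Sm_step m) hi) mulrCA (eqtMl _ HU1 hi).
by rewrite mulr1.
Qed.

End Nat.

Lemma todd0 : todd_series 0 = 1.
Proof.
rewrite /todd_series /ser_inv /ser_cpow big_ord1 gbinom_m1 expr0 mul1r.
by [].
Qed.

Lemma cpow_nat n m : ser_cpow todd_series (m.+1)%:R n =
  \sum_(k < n.+1) 'C(m + k, k)%:R * ser_pow (ser_sub ser_one u) k n.
Proof.
set N := n.
have hn : (n <= N)%N by [].
have H10 : (H N - 1)`_0 = 0.
  by rewrite coefB coefPser // todd0 coef1 subrr.
rewrite /ser_cpow.
transitivity ((H N ^+ m.+1)`_n).
  transitivity (\sum_(k < n.+1) ((H N - 1) ^+ k)`_n *+ 'C(m.+1, k)).
    apply: eq_bigr => k _; rewrite gbinom_nat mulr_natl (ser_powP' (N := N)) //.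
    by rewrite (eqtX k (Ph1 (N:=N)) hn).
  rewrite -(@sum_ext _ n.+1 (n + m.+2) (fun k => ((H N - 1) ^+ k)`_n *+ 'C(m.+1, k))); last 2 first.
  - lia.
  - by move=> k hk _; rewrite pow_vanish // mul0rn.
  rewrite (@sum_ext _ m.+2 (n + m.+2) (fun k => ((H N - 1) ^+ k)`_n *+ 'C(m.+1, k))); last 2 first.
  - lia.
  - by move=> k hk _; rewrite bin_small // mulr0n.
  rewrite -[H N](subrK 1) exprD1n coef_sum addrK.
  by apply: eq_bigr => k _; rewrite coefMn.
rewrite (HSm (N:=N) m hn) /Sm coef_sum.
rewrite (@sum_ext _ n.+1 N.+1 (fun k => (V N ^+ k *+ 'C(m + k, k))`_n)) //.
apply: eq_bigr => k _; rewrite mulr_natl (ser_powP' (N := N)) // (eqtX k (Pv (N:=N)) hn) coefMn //.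
by move=> k hk _; rewrite coefMn pow_vanish ?V0 // mul0rn.
Qed.
Lemma natS_neq0 k : (1 + k%:R : rat) != 0.
Proof. by rewrite addrC natr1 pnatr_eq0. Qed.

Lemma fact_neq0 k : (k`!%:R : rat) != 0.
Proof. by rewrite pnatr_eq0 -lt0n fact_gt0. Qed.

Lemma fact_div (c : rat) k : (c / (k.+1)`!%:R) *+ k.+1 = c / k`!%:R.
Proof.
rewrite factS natrM -mulr_natr; field.
by rewrite fact_neq0 natS_neq0.
Qed.

Definition cst2 (m j : nat) : rat :=
  (-1) ^+ (m + j) * j`!%:R * (stirling2 m j)%:R / m`!%:R.

Lemma cst2_rec m j : (m.+1%:R : rat)^-1 * ((cst2 m j - cst2 m j.+1) *+ j.+1) = cst2 m.+1 j.+1.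
Proof.
rewrite /cst2 [stirling2 m.+1 j.+1]/= natrD natrM !factS !natrM.
have e1 : (-1) ^+ (m + j.+1) = - (-1) ^+ (m + j) :> rat by rewrite addnS exprS mulN1r.
have e2 : (-1) ^+ (m.+1 + j.+1) = (-1) ^+ (m + j) :> rat by rewrite addSn exprS e1 mulN1r opprK.
rewrite e1 e2 -[(_ - _) *+ _]mulr_natr.
have hG := fact_neq0 m.
have hM : (m.+1%:R : rat) != 0 by rewrite pnatr_eq0.
field.
by rewrite hG natS_neq0.
Qed.

Section Stir.
Variable N : nat.
Definition E : {poly Q} := 'X * U N.

Lemma E0 : E`_0 = 0.
Proof. by rewrite /E coefXM. Qed.

Lemma ES i : (i <= N)%N -> E`_i.+1 = u i.
Proof. by move=> hi; rewrite /E coefXM /= coefPser. Qed.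

Lemma dE : eqt N (E^`()) (1 - E).
Proof.
move=> i hi; rewrite coef_deriv ES // u_val -polyCMn fact_div coefB coef1.
case: i hi => [|i] hi.
  by rewrite E0 subr0 expr0 fact0 /= !mulr1n mul1r invr1.
rewrite (ES (ltnW hi)).
by rewrite u_val sub0r -polyCN exprS mulN1r mulNr.
Qed.

Lemma Erec j m : (m <= N)%N ->
  (E ^+ j.+1)`_m.+1 *+ m.+1 = ((E ^+ j)`_m - (E ^+ j.+1)`_m) *+ j.+1.
Proof.
move=> hm; rewrite -coef_deriv deriv_exp /= coefMn (eqtMr _ dE hm).
by rewrite mulrBl mul1r -exprS coefB.
Qed.

Lemma Epow m j : (m <= N.+1)%N -> (E ^+ j)`_m = (cst2 m j)%:P.
Proof.
elim: m j => [|m IH] j hm.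
  case: j => [|j]; first by rewrite expr0 coef1 /cst2 /= expr0 !mul1r polyC_natr fact0.
  by rewrite exprS coef0M E0 mul0r /cst2 /= mulr0 mul0r.
case: j => [|j].
  by rewrite expr0 coef1 /cst2 /= mulr0 mul0r.
have hm' : (m <= N)%N by [].
have := Erec j hm'; rewrite !IH ?(ltnW hm) // -!polyCB -!polyCMn.
move=> h.
have -> : (E ^+ j.+1)`_m.+1 = ((m.+1%:R : rat)^-1) *: ((E ^+ j.+1)`_m.+1 *+ m.+1).
  by rewrite -scaler_nat scalerA mulVf ?scale1r // pnatr_eq0.
by rewrite h -mul_polyC -polyCM cst2_rec.
Qed.

End Stir.

Lemma upow j n N : (n <= N)%N -> (n + j <= N.+1)%N ->
  ser_pow u j n = (cst2 (n + j) j)%:P.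
Proof.
move=> h1 h2; rewrite (ser_powP' (N := N)) // -(Epow (N := N)) //.
by rewrite /E exprMn coefXnM ltnNge leq_addl /= addnK.
Qed.

Lemma inner_pow n k : (k <= n)%N -> inner n k = ser_pow (ser_sub ser_one u) k n.
Proof.
move=> hk; rewrite (ser_powP' (N := n + n)) ?leq_addr //.
rewrite (eqtX k (Pv (N := n + n)) (leq_addr _ _)) /V addrC exprD1n coef_sum /inner.
apply: eq_bigr => j _; rewrite coefMn [(- U _) ^+ _]exprNn.
rewrite (_ : (-1) ^+ j * U (n + n) ^+ j = ((-1) ^+ j)%:P * U (n + n) ^+ j); last by rewrite rmorph_sign.
rewrite coefCM.
rewrite -(ser_powP' (N := n + n)) ?leq_addr // (upow (N := n + n)); last 2 first.
- by rewrite leq_addr.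
- have := ltn_ord j; lia.
rewrite -(rmorph_sign (@polyC rat)) -polyCM -polyCMn; congr (_%:P).
rewrite /cst2 natrM -mulr_natr.
rewrite (exprD _ (n + j) j) mulrA.
have hs : ((-1) ^+ j * (-1) ^+ j : rat) = 1 by rewrite -expr2 sqrr_sign.
rewrite -[_ *+ 'C(k, j)]mulr_natr.
transitivity (((-1) ^+ j * (-1) ^+ j) * (j`!%:R * (-1) ^+ (n + j) / (n + j)`!%:R * 'C(k, j)%:R * (stirling2 (n + j) j)%:R) : rat).
  by rewrite hs !mul1r.
ring.
Qed.

Lemma poly_nat_roots (D : Q) : (forall m : nat, D.[m%:R] = 0) -> D = 0.
Proof.
move=> h; apply/eqP; apply: contraT => hD.
have := max_poly_roots hD (rs := [seq (i%:R : rat) | i <- iota 0 (size D)]).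
rewrite size_map size_iota ltnn; apply.
  by apply/allP => x /mapP [i _ ->]; rewrite /root h.
rewrite map_inj_uniq ?iota_uniq // => a b /eqP; rewrite eqr_nat => /eqP //.
Qed.

Theorem mainTheorem8 (n : nat) :
  stirling_poly n =
  n`!%:R * \sum_(k < n.+1) gbinom ('X + k%:R) k *
    \sum_(j < k.+1)
      ((j`!%:R * (-1) ^+ (n + j) / (n + j)`!%:R : rat)
        * (('C(k, j) * stirling2 (n + j) j)%N)%:R)%:P.
Proof.
rewrite /stirling_poly; congr (_ * _); change (ser_cpow todd_series ('X + 1) n = Bf n 'X).
set A := ser_cpow todd_series 'X n.
suff hD : A \Po ('X + 1) - Bf n 'X = 0.
  by rewrite cpow_comp -/A; apply/eqP; rewrite -subr_eq0 hD.
apply: poly_nat_roots => m.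
apply: (@polyC_inj rat); rewrite -comp_polyCr comp_polyB -comp_polyA Bf_comp.
rewrite comp_polyD comp_polyX comp_polyC polyC_natr natr1 /A -cpow_comp cpow_nat.
apply/eqP; rewrite subr_eq0; apply/eqP; rewrite /Bf; apply: eq_bigr => k _.
rewrite -natrD gbinom_nat inner_pow //.
by rewrite -ltnS.
Qed.
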